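(* For each $n\ge 2$ and $\ell\ge 2$ there exists a lattice tiling of $\mathbb{Z}^n$ with $\mathcal{S}_{L,K}$, where $L=(\ell,\ell,\dots,\ell)$ and $K=(\ell-1,\ell-1,\dots,\ell-1)$.
   Context: The discrete $n$-dimensional chair is $\mathcal{S}_{L,K}=\{(x_1,\dots,x_n)\in\mathbb{Z}^n: 0\le x_i<\ell_i \text{ for all } i, \text{ and there exists } j \text{ with } x_j<\ell_j-k_j\}$. A lattice is the set of integer combinations of $n$ linearly independent vectors of $\mathbb{Z}^n$; a lattice tiling of $\mathbb{Z}^n$ with a finite $\mathcal{S}\subset\mathbb{Z}^n$ is a lattice $\Lambda$ such that the translates $X+\mathcal{S}$, $X\in\Lambda$, are pairwise disjoint and cover $\mathbb{Z}^n$. *)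

(* Defs.v *)
From mathcomp Require Import all_boot all_order all_algebra.
Set Implicit Arguments. Unset Strict Implicit. Unset Printing Implicit Defensive.
Import Order.TTheory GRing.Theory Num.Theory.
Local Open Scope ring_scope.

Definition chair (n : nat) (L K : 'rV[int]_n) : pred 'rV[int]_n :=
  fun x => [forall i, (0 <= x 0 i) && (x 0 i < L 0 i)]
           && [exists j, x 0 j < L 0 j - K 0 j].

(* The rows of B are n linearly independent vectors of Z^n
   (independence over Z, equivalently over Q/R for integer vectors). *)
Definition lin_indep_rows (n : nat) (B : 'M[int]_n) : Prop :=
  forall c : 'rV[int]_n, c *m B = 0 -> c = 0.

Definition lattice_of (n : nat) (B : 'M[int]_n) : 'rV[int]_n -> Prop :=
  fun X => exists c : 'rV[int]_n, X = c *m B.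

Definition lattice_tiling (n : nat) (B : 'M[int]_n) (S : pred 'rV[int]_n) : Prop :=
  lin_indep_rows B /\
  (forall z : 'rV[int]_n, exists X, lattice_of B X /\ S (z - X)) /\
  (forall X Y z : 'rV[int]_n, lattice_of B X -> lattice_of B Y ->
      S (z - X) -> S (z - Y) -> X = Y).

(* Main.v *)
Require Import Defs.
From mathcomp Require Import all_boot all_order all_algebra.
Import Order.TTheory GRing.Theory Num.Theory.
Local Open Scope ring_scope.
From mathcomp Require Import zify ring.

Section Pure.
Variable l : nat.
Hypothesis hl : (1 < l)%N.
Let li : int := l%:Z.

Definition dd (a : nat -> int) (j : nat) : int := li * a j.+1 - (li - 1) * a j.

Lemma argmax (a : nat -> int) N : exists j0, (j0 <= N)%N /\ forall i, (i <= N)%N -> a i <= a j0.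
Proof.
elim: N => [|N [j0 [hj0 hmax]]].
  exists 0%N; split => // i; rewrite leqn0 => /eqP ->; by [].
case: (lerP (a N.+1) (a j0)) => h.
  exists j0; split; first by lia.
  move=> i; rewrite leq_eqVlt => /orP [/eqP -> //|]; rewrite ltnS; exact: hmax.
exists N.+1; split => // i; rewrite leq_eqVlt => /orP [/eqP -> //|]; rewrite ltnS => hi.
by apply: le_trans (hmax _ hi) _; apply: ltW.
Qed.

Lemma spread_pos (a : nat -> int) N : a 0%N = 0 -> a N = 0 ->
  (exists j, (j <= N)%N /\ 0 < a j) ->
  exists p q, [/\ (p < N)%N, (q < N)%N & 2 * li - 1 <= dd a p - dd a q].
Proof.
move=> a0 aN [j [hj apos]].
have [j0 [hj0 hmax]] := argmax a N.
set M := a j0.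
have Mpos : 0 < M by apply: lt_le_trans apos (hmax _ hj).
have exP : exists k, a k == M by exists j0.
have exQ : exists k, (k <= N)%N && (a k == M) by exists j0; rewrite hj0 eqxx.
case: (ex_minnP exP) => p' /eqP hp' hpmin.
have hp'j0 : (p' <= j0)%N by apply: hpmin; rewrite eqxx.
have hp'0 : p' != 0%N by apply/eqP => E; move: hp'; rewrite E a0 => E'; move: Mpos; rewrite -E' ltxx.
have hqb : forall k, (k <= N)%N && (a k == M) -> (k <= N)%N by move=> k /andP [].
case: (ex_maxnP exQ hqb) => q /andP [hqN /eqP hq] hqmax.
have hqN' : q != N by apply/eqP => E; move: hq; rewrite E aN => E'; move: Mpos; rewrite E' ltxx.
exists p'.-1, q; split; [lia | lia |].
have ap : a p'.-1 <= M - 1.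
  have h1 : a p'.-1 <= M by apply: hmax; lia.
  have h2 : a p'.-1 != M.
    apply/negP => /eqP E. have := hpmin p'.-1. rewrite E eqxx => /(_ isT). lia.
  have : a p'.-1 < M by rewrite lt_neqAle h2 h1.
  lia.
have aq : a q.+1 <= M - 1.
  have h1 : a q.+1 <= M by apply: hmax; lia.
  have h2 : a q.+1 != M.
    apply/negP => /eqP E. have := hqmax q.+1. rewrite E eqxx andbT => H.
    have : (q.+1 <= N)%N by lia.
    move/H; lia.
  have : a q.+1 < M by rewrite lt_neqAle h2 h1.
  lia.
rewrite /dd prednK; last by lia.
rewrite hp' hq.
have hli : 2 <= li by rewrite /li; lia.
nia.
Qed.


Lemma spread (a : nat -> int) N : a 0%N = 0 -> a N = 0 ->
  (exists j, (j <= N)%N /\ a j != 0) ->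
  exists p q, [/\ (p < N)%N, (q < N)%N & 2 * li - 1 <= dd a p - dd a q].
Proof.
move=> a0 aN [j [hj anz]].
case: (ltrP 0 (a j)) => h.
  by apply: spread_pos => //; exists j.
have : exists j, (j <= N)%N /\ 0 < (fun k => - a k) j.
  by exists j; split => //=; rewrite oppr_gt0 lt_neqAle anz h.
move: (spread_pos (fun k => - a k) N); rewrite a0 aN oppr0 => /(_ erefl erefl) H /H {H}.
move=> [p [q [hp hq H]]]; exists q, p; split => //.
move: H; rewrite /dd; lia.
Qed.

Fixpoint T (x : nat -> int) (j : nat) : int :=
  if j is j'.+1 then (li - 1) * T x j' + x j' * li ^+ j' else 0.

Lemma T_dd a j : a 0%N = 0 -> T (dd a) j = li ^+ j * a j.
Proof.
move=> a0; elim: j => [|j IH] /=; first by rewrite a0 mulr0.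
rewrite IH /dd exprS; ring.
Qed.

Lemma T_lin (x y : nat -> int) c j :
  T (fun k => x k - y k - c) j = T x j - T y j - c * (li ^+ j - (li - 1) ^+ j).
Proof.
elim: j => [|j IH] /=; first by rewrite !expr0 subrr !mulr0 subr0.
rewrite IH !exprS; ring.
Qed.

Lemma T_sub (x y : nat -> int) j : T (fun k => x k - y k) j = T x j - T y j.
Proof. elim: j => [|j IH] /=; first by rewrite subr0. rewrite IH; ring. Qed.

Lemma T_cst c j : T (fun _ => c) j = c * (li ^+ j - (li - 1) ^+ j).
Proof.
elim: j => [|j IH] /=; first by rewrite !expr0 subrr mulr0.
rewrite IH !exprS; ring.
Qed.

Lemma T_ext (x y : nat -> int) j : (forall k, x k = y k) -> T x j = T y j.
Proof. move=> H; elim: j => [|j IH] //=; by rewrite IH H. Qed.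

Lemma T_split x j k : exists U, T x (j + k) = (li - 1) ^+ k * T x j + li ^+ j * U.
Proof.
elim: k => [|k [U IH]]; first by exists 0; rewrite addn0 mulr0 addr0 expr0 mul1r.
exists ((li - 1) * U + x (j + k)%N * li ^+ k).
rewrite addnS /= IH exprS exprD; ring.
Qed.

Lemma coprime_l : coprimez li (li - 1).
Proof.
rewrite coprimezE.
have -> : `|li - 1|%N = l.-1 by rewrite /li; lia.
have -> : `|li|%N = l by [].
rewrite -{1}(prednK (ltnW hl)); exact: coprimeSn.
Qed.

Lemma kernel x N : T x N = 0 ->
  exists a, [/\ a 0%N = 0, a N = 0 & forall j, (j < N)%N -> x j = dd a j].
Proof.
move=> TN.
have hdiv : forall j, (j <= N)%N -> (li ^+ j %| T x j)%Z.
  move=> j hj; have [U HU] := T_split x j (N - j).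
  move: HU; rewrite subnKC // TN => /eqP; rewrite eq_sym addr_eq0 => /eqP E.
  rewrite -(@Gauss_dvdzr _ ((li - 1) ^+ (N - j))); last first.
    by apply: coprimezXl; apply: coprimezXr; exact: coprime_l.
  by rewrite E rpredN dvdz_mulr.
have lnz : forall j, li ^+ j != 0 by move=> j; rewrite expf_neq0 // /li; lia.
exists (fun j => (T x j %/ li ^+ j)%Z); split.
- by [].
- by rewrite TN div0z.
move=> j hj; apply: (mulfI (lnz j)).
rewrite /dd mulrBr mulrA -exprSr [X in _ = X - _]mulrC divzK; last exact: hdiv.
rewrite mulrCA [X in _ = _ - _ * X]mulrC divzK; last by apply: hdiv; lia.
rewrite /=; ring.
Qed.

End Pure.

Lemma sum_if_eq (g : nat -> int) m k :
  \sum_(i < m) (if (i:nat) == k then g i else 0) = if (k < m)%N then g k else 0.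
Proof.
rewrite -(big_mkord xpredT (fun i => if i == k then g i else 0)).
elim: m => [|m IH]; first by rewrite big_geq.
rewrite big_nat_recr //= IH.
have [->|hmk] := eqVneq m k; first by rewrite ltnn ltnSn add0r.
have -> : (k < m.+1)%N = (k < m)%N by move: hmk => /eqP; lia.
by rewrite addr0.
Qed.

Section Mat.
Variables (n' l : nat).
Hypothesis hl : (1 < l)%N.
Hypothesis hn : (0 < n')%N.
Let li : int := l%:Z.

Definition Bm : 'M[int]_n'.+1 := \matrix_(i, j)
  (if (i < n')%N then (if (j:nat) == i then li else if (j:nat) == i.+1 then -(li-1) else 0) else 1).

Definition alc (c : 'rV[int]_n'.+1) : nat -> int :=
  fun k => if (0 < k <= n')%N then c 0 (inord k.-1) else 0.

Lemma mulB c (j : 'I_n'.+1) : (c *m Bm) 0 j = c 0 ord_max + dd l (alc c) j.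
Proof.
rewrite mxE big_ord_recr /= mxE ltnn mulr1 addrC; congr (_ + _).
transitivity (\sum_(i < n') (li * (if (i:nat) == j then alc c i.+1 else 0)
   - (li-1) * (if (i:nat) == j.-1 then (if (0 < j)%N then alc c i.+1 else 0) else 0))).
  apply: eq_bigr => i _.
  have E : c 0 (widen_ord (leqnSn n') i) = alc c i.+1.
    rewrite /alc /= ltn_ord; congr (c 0 _); apply: val_inj; rewrite /= inordK //; have := ltn_ord i; lia.
  rewrite /Bm mxE /= ltn_ord E.
  move: (alc c i.+1) (nat_of_ord i) (nat_of_ord j) => v a b.
  do 5?(case: ifP => ?); (try by ring); lia.
rewrite sumrB -!mulr_sumr (sum_if_eq (fun k => alc c k.+1)) /dd.
have -> : (if (j < n')%N then alc c j.+1 else 0) = alc c j.+1.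
  case: ifP => // h; rewrite /alc; case: ifP => //; lia.
congr (_ - _ * _).
rewrite (sum_if_eq (fun k => if (0 < j)%N then alc c k.+1 else 0)).
case: (posnP j) => h.
  by rewrite /alc h /= if_same.
rewrite prednK //; case: ifP => //; have := ltn_ord j; lia.
Qed.


Lemma alc0 c : alc c 0 = 0. Proof. by []. Qed.
Lemma alcN c : alc c n'.+1 = 0. Proof. by rewrite /alc ltnn andbF. Qed.
Lemma alcS c (j : 'I_n'.+1) : (j < n')%N -> alc c j.+1 = c 0 j.
Proof.
move=> hj; rewrite /alc hj /=; congr (c 0 _); apply: val_inj; rewrite /= inordK //.
Qed.

Lemma smallspread (c : 'rV[int]_n'.+1) :
  (forall p q : 'I_n'.+1, (c *m Bm) 0 p - (c *m Bm) 0 q <= 2 * li - 2) ->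
  (forall j : 'I_n'.+1, (j < n')%N -> c 0 j = 0) /\ (forall j, (c *m Bm) 0 j = c 0 ord_max).
Proof.
move=> H.
have az : forall k, (k <= n'.+1)%N -> alc c k = 0.
  move=> k hk; apply/eqP; apply/negPn/negP => nz.
  have [p [q [hp hq hpq]]] := @spread l hl (alc c) n'.+1 (alc0 c) (alcN c) (ex_intro _ k (conj hk nz)).
  have := H (inord p) (inord q); rewrite !mulB !inordK //.
  move: hpq; rewrite /li; lia.
split.
  move=> j hj; rewrite -alcS // az //; lia.
move=> j; rewrite mulB /dd !az ?mulr0 ?subr0 ?addr0 //; have := ltn_ord j; lia.
Qed.

Lemma indepB : lin_indep_rows Bm.
Proof.
move=> c H.
have [h1 h2] : (forall j : 'I_n'.+1, (j < n')%N -> c 0 j = 0) /\ (forall j, (c *m Bm) 0 j = c 0 ord_max).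
  apply: smallspread => p q; rewrite H !mxE subrr /li; lia.
have hl0 : c 0 ord_max = 0 by rewrite -(h2 ord_max) H mxE.
apply/rowP => j; rewrite [RHS]mxE.
case: (ltnP j n') => hj; first exact: h1.
have -> : j = ord_max by apply: val_inj => /=; have := ltn_ord j; lia.
exact: hl0.
Qed.


Lemma chairE (s : 'rV[int]_n'.+1) : chair (const_mx li) (const_mx (li - 1)) s ->
  (forall j, 0 <= s 0 j /\ s 0 j <= li - 1) /\ exists j, s 0 j = 0.
Proof.
move=> /andP [/forallP hx /existsP [jx hjx]]; split.
  move=> j; move: (hx j); rewrite !mxE => /andP [h1 h2]; lia.
exists jx; move: hjx (hx jx); rewrite !mxE => h1 /andP [h2 h3]; lia.
Qed.

Lemma disjB (X Y z : 'rV[int]_n'.+1) : lattice_of Bm X -> lattice_of Bm Y ->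
  chair (const_mx li) (const_mx (li - 1)) (z - X) ->
  chair (const_mx li) (const_mx (li - 1)) (z - Y) -> X = Y.
Proof.
move=> [cx ->] [cy ->] /chairE [hx [jx hjx]] /chairE [hy [jy hjy]].
set c := cx - cy.
have E : forall j, (c *m Bm) 0 j = (z - cy *m Bm) 0 j - (z - cx *m Bm) 0 j.
  move=> j; rewrite /c mulmxBl.
  move: (cx *m Bm) (cy *m Bm) => A B'; rewrite !mxE; ring.
have Hs : forall p q : 'I_n'.+1, (c *m Bm) 0 p - (c *m Bm) 0 q <= 2 * li - 2.
  move=> p q; rewrite !E; move: (hx p) (hx q) (hy p) (hy q).
  move: ((z - cx *m Bm) 0 p : int) ((z - cx *m Bm) 0 q : int) ((z - cy *m Bm) 0 p : int) ((z - cy *m Bm) 0 q : int) => a b d e; lia.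
have [_ h2] := smallspread _ Hs.
have k0 : c 0 ord_max = 0.
  move: (E jx) (E jy) (hx jy) (hy jx) hjx hjy; rewrite !h2.
  move: (c 0 ord_max : int) ((z - cx *m Bm) 0 jx : int) ((z - cx *m Bm) 0 jy : int) ((z - cy *m Bm) 0 jx : int) ((z - cy *m Bm) 0 jy : int) => k a b d e; lia.
apply/eqP; rewrite -subr_eq0 -mulmxBl -/c; apply/eqP/rowP => j.
by rewrite h2 k0 mxE.
Qed.


Definition Fr (x : 'rV[int]_n'.+1) : int := T l (fun k => x 0 (inord k)) n'.+1.
Definition mi : int := li ^+ n'.+1 - (li - 1) ^+ n'.+1.

Lemma F_sub x y : Fr (x - y) = Fr x - Fr y.
Proof. rewrite /Fr -T_sub; apply: T_ext => k; by rewrite !mxE. Qed.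

Lemma alc_eq c (a : nat -> int) k : a 0%N = 0 -> a n'.+1 = 0 ->
  c = \row_(j < n'.+1) (if (j < n')%N then a j.+1 else k) ->
  forall i, (i <= n'.+1)%N -> alc c i = a i.
Proof.
move=> a0 an -> i hi; rewrite /alc.
case: (posnP i) => [-> //|hi0].
case: (leqP i n') => hin /=.
  rewrite mxE inordK; last by lia.
  by rewrite ifT ?prednK //; lia.
have -> : i = n'.+1 by lia.
by [].
Qed.

Lemma ker_lattice x k : Fr x = k * mi -> lattice_of Bm x.
Proof.
move=> hF.
have h0 : T l (fun j => x 0 (inord j) - k) n'.+1 = 0.
  by rewrite T_sub T_cst -/(Fr x) hF subrr.
have [a [a0 an ha]] := @kernel l hl _ _ h0.
exists (\row_(j < n'.+1) (if (j < n')%N then a j.+1 else k)).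
apply/rowP => j; rewrite mulB mxE ltnn.
have E := alc_eq _ a k a0 an erefl.
rewrite /dd !E; last by have := ltn_ord j; lia.
  rewrite -/(dd l a j) -ha // inord_val; ring.
have := ltn_ord j; lia.
Qed.


Definition mn : nat := (l ^ n'.+1 - (l - 1) ^ n'.+1)%N.

Lemma mn_pos : (0 < mn)%N.
Proof. rewrite /mn subn_gt0 ltn_exp2r //; lia. Qed.

Lemma mi_nat : mi = mn%:Z.
Proof.
rewrite /mi /mn -subzn; last by rewrite leq_exp2r //; lia.
have -> : li - 1 = (l - 1)%N%:Z by rewrite /li; lia.
by rewrite /li -!natz -!natrX.
Qed.

Lemma mod_lt x : (`|(Fr x %% mi)%Z|%N < mn)%N.
Proof.
have hm : 0 < mi by rewrite mi_nat ltz_nat mn_pos.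
have h1 := modz_ge0 (Fr x) (lt0r_neq0 hm).
have h2 := ltz_pmod (Fr x) hm.
move: h1 h2; rewrite mi_nat; move: ((Fr x %% mn%:Z)%Z : int) => r; lia.
Qed.

Definition phi (x : 'rV[int]_n'.+1) : 'I_mn := Ordinal (mod_lt x).

Lemma phi_eq x y : phi x = phi y -> lattice_of Bm (x - y).
Proof.
move=> E.
have hm : mi != 0 by rewrite mi_nat; have := mn_pos; lia.
have E' : (Fr x %% mi)%Z = (Fr y %% mi)%Z.
  have := congr1 (fun o : 'I_mn => (o : nat)%:Z) E => /=.
  by rewrite !gez0_abs ?modz_ge0.
apply: (@ker_lattice _ ((Fr x %/ mi)%Z - (Fr y %/ mi)%Z)).
rewrite F_sub {1}(divz_eq (Fr x) mi) {1}(divz_eq (Fr y) mi) E'; ring.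
Qed.

Definition emb (f : {ffun 'I_n'.+1 -> 'I_l}) : 'rV[int]_n'.+1 := \row_j ((f j : nat)%:Z).
Definition Aset := [set f : {ffun 'I_n'.+1 -> 'I_l} | [exists j, (f j : nat) == 0%N]].

Lemma chair_emb f : f \in Aset -> chair (const_mx li) (const_mx (li - 1)) (emb f).
Proof.
rewrite inE => /existsP [j0 /eqP hj0]; apply/andP; split.
  apply/forallP => j; rewrite !mxE /li; have := ltn_ord (f j); move: (nat_of_ord (f j)) => v; lia.
apply/existsP; exists j0; rewrite !mxE hj0 /li; lia.
Qed.

Lemma card_A : #|Aset| = mn.
Proof.
have hc := cardsC Aset.
rewrite card_ffun !card_ord in hc.
pose R := [pred i : 'I_l | (i : nat) != 0%N].
have hR : #|R| = (l - 1)%N.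
  have := cardC R; rewrite card_ord.
  have -> : #|[predC R]| = 1%N.
    have l0 : (0 < l)%N by lia.
    rewrite -(card1 (Ordinal l0)); apply: eq_card => i; rewrite !inE /=.
    rewrite negbK; apply/eqP/eqP => [h|-> //]; exact: val_inj.
  move: #|R| => r; lia.
have hCA : #|~: Aset| = ((l - 1) ^ n'.+1)%N.
  transitivity #|ffun_on_mem 'I_n'.+1 (mem R)|; last by rewrite card_ffun_on card_ord hR.
  apply: eq_card => f.
  rewrite !inE negb_exists; apply/forallP/ffun_onP => H x; have := H x; by rewrite !inE.
rewrite /mn -hc hCA; lia.
Qed.

Lemma phi_surj (r : 'I_mn) : exists2 f, f \in Aset & phi (emb f) = r.
Proof.
have inj : {in Aset &, injective (fun f => phi (emb f))}.
  move=> f g hf hg E.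
  have hl2 := phi_eq _ _ E.
  have l0 : lattice_of Bm 0 by exists 0; rewrite mul0mx.
  have e := @disjB 0 (emb f - emb g) (emb f) l0 hl2.
  have ee : emb f - (emb f - emb g) = emb g by rewrite opprB addrC subrK.
  rewrite subr0 ee in e.
  have := e (chair_emb _ hf) (chair_emb _ hg) => /eqP; rewrite eq_sym subr_eq0 => /eqP H.
  apply/ffunP => j; apply: val_inj; have := congr1 (fun M : 'rV[int]_n'.+1 => M 0 j) H; rewrite !mxE; by case.
have : (fun f => phi (emb f)) @: Aset = setT.
  apply/eqP; rewrite eqEcard subsetT cardsT card_ord card_in_imset // card_A leqnn.
  by [].
move=> hS; have : r \in (fun f => phi (emb f)) @: Aset by rewrite hS inE.
by case/imsetP => f hf ->; exists f.
Qed.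

Lemma coverB z : exists X, lattice_of Bm X /\ chair (const_mx li) (const_mx (li - 1)) (z - X).
Proof.
have [f hf E] := phi_surj (phi z).
exists (z - emb f); split.
  exact: phi_eq.
have -> : z - (z - emb f) = emb f by rewrite opprB addrC subrK.
exact: chair_emb.
Qed.

End Mat.

Theorem mainTheorem8 (n l : nat) : (2 <= n)%N -> (2 <= l)%N ->
  exists B : 'M[int]_n,
    lattice_tiling B (chair (const_mx (l%:Z)) (const_mx (l%:Z - 1))).
Proof.
case: n => [//|n'] hn hl.
have hn' : (0 < n')%N by [].
exists (Bm n' l); split; first exact: indepB.
split; first exact: coverB.
move=> X Y z; exact: disjB.
Qed.
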